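(* Every connected bicirculant $B(m;R,S,T)$ with $m\le 5$ is hamiltonian, except for the complete graph $K_2$ and the Petersen graph $G(5,2)$.
   Context: For an integer $m\ge 1$ and subsets $R,S,T\subseteq\mathbb{Z}_m$ with $R=-R$, $T=-T$, $0\notin R\cup T$, $0\in S$ and $|R|=|T|$, the bicirculant $B(m;R,S,T)$ is the graph with vertex set $\{u_0,\dots,u_{m-1}\}\cup\{v_0,\dots,v_{m-1}\}$ and edge set $\{u_iu_{i+j}: i\in\mathbb{Z}_m, j\in R\}\cup\{v_iv_{i+j}: i\in\mathbb{Z}_m, j\in T\}\cup\{u_iv_{i+j}: i\in\mathbb{Z}_m, j\in S\}$ (indices mod $m$). $G(5,2)=B(5;\{1,-1\},\{0\},\{2,-2\})$ and $K_2=B(1;\emptyset,\{0\},\emptyset)$. *)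

(* Defs.v *)
From mathcomp Require Import all_boot.
Set Implicit Arguments. Unset Strict Implicit. Unset Printing Implicit Defensive.

(* Arithmetic of Z_m, represented on 'I_m (valid for every m >= 1). *)
Lemma zmod_lt (m : nat) (i : 'I_m) (k : nat) : k %% m < m.
Proof. by rewrite ltn_pmod // (leq_ltn_trans (leq0n _) (ltn_ord i)). Qed.

Definition zadd (m : nat) (i j : 'I_m) : 'I_m := Ordinal (zmod_lt i (i + j)).
Definition zopp (m : nat) (i : 'I_m) : 'I_m := Ordinal (zmod_lt i (m - i)).

Definition symm_set (m : nat) (X : {set 'I_m}) : Prop :=
  forall j : 'I_m, (zopp j \in X) = (j \in X).

(* Vertices of B(m;R,S,T): (false, i) is u_i and (true, i) is v_i. *)
Definition bvert (m : nat) := (bool * 'I_m)%type.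

Definition bicirc_adj (m : nat) (R S T : {set 'I_m}) : rel (bvert m) :=
  fun x y =>
    match x.1, y.1 with
    | false, false => [exists r in R, y.2 == zadd x.2 r]
    | true, true => [exists t in T, y.2 == zadd x.2 t]
    | false, true => [exists s in S, y.2 == zadd x.2 s]
    | true, false => [exists s in S, x.2 == zadd y.2 s]
    end.

Definition gconnected (V : finType) (e : rel V) : Prop :=
  forall x y : V, connect e x y.

Definition hamiltonian (V : finType) (e : rel V) : Prop :=
  exists s : seq V, [/\ uniq s, (forall x : V, x \in s), 3 <= size s & cycle e s].

Definition gisomorphic (V W : finType) (e : rel V) (f : rel W) : Prop :=
  exists g : V -> W, bijective g /\ forall x y : V, f (g x) (g y) = e x y.

Definition K2_adj : rel (bvert 1) :=
  bicirc_adj set0 [set (@ord0 0)] set0.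

Definition petersen_adj : rel (bvert 5) :=
  bicirc_adj [set (inord 1 : 'I_5); inord 4] [set (inord 0 : 'I_5)]
             [set (inord 2 : 'I_5); inord 3].

(* Main.v *)
Require Import Defs.
From mathcomp Require Import all_boot.
From mathcomp Require Import zify.
Set Implicit Arguments. Unset Strict Implicit. Unset Printing Implicit Defensive.

Definition V := (bool * nat)%type.
Definition verts (m : nat) : seq V :=
  map (pair false) (iota 0 m) ++ map (pair true) (iota 0 m).
Definition hasr (r : nat -> bool) (m i j : nat) :=
  has (fun k => r k && (j == (i + k) %% m)) (iota 0 m).
Definition adjc (m : nat) (r s t : nat -> bool) : rel V := fun x y =>
  match x.1, y.1 with
  | false, false => hasr r m x.2 y.2
  | true, true => hasr t m x.2 y.2
  | false, true => hasr s m x.2 y.2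
  | true, false => hasr s m y.2 x.2
  end.

Fixpoint lhas (T : Type) (a : T -> bool) (s : seq T) : bool :=
  if s is x :: s' then (if a x then true else lhas a s') else false.

Fixpoint hdfs (vs : seq V) (ec : rel V) (st : V) (n : nat) (vis : seq V) (cur : V) : bool :=
  if ec cur st && all (fun v => v \in vis) vs then true else
  if n is n'.+1 then
    lhas (fun v => if v \in vis then false else
                  if ec cur v then hdfs vs ec st n' (v :: vis) v else false) vs
  else false.

Definition clos (m : nat) (ec : rel V) : seq V :=
  iter (size (verts m))
    (fun C => undup (C ++ [seq v <- verts m | has (fun u => ec u v) C])) [:: (false, 0)].

Definition disconn (m : nat) (ec : rel V) : bool :=
  let C := clos m ec in
  [&& all (fun u => all (fun v => (u \in C) ==> ec u v ==> (v \in C)) (verts m)) (verts m),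
      (false, 0) \in C & ~~ all (fun v => v \in C) (verts m)].

Definition iso_c (m : nat) (ec fc : rel V) (g gi : V -> V) : bool :=
  all (fun v => [&& g v \in verts m, gi v \in verts m, gi (g v) == v & g (gi v) == v]) (verts m)
  && all (fun v => all (fun w => fc (g v) (g w) == ec v w) (verts m)) (verts m).

Definition k2c : rel V := adjc 1 (fun _ => false) (fun k => k == 0) (fun _ => false).
Definition petc : rel V :=
  adjc 5 (fun k => (k == 1) || (k == 4)) (fun k => k == 0) (fun k => (k == 2) || (k == 3)).

Definition gA (k : nat) (v : V) : V := (v.1, if v.1 then (v.2 + 5 - k) %% 5 else v.2).
Definition gAi (k : nat) (v : V) : V := (v.1, if v.1 then (v.2 + k) %% 5 else v.2).
Definition gB (k : nat) (v : V) : V := (~~ v.1, if v.1 then (v.2 + 5 - k) %% 5 else v.2).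
Definition gBi (k : nat) (v : V) : V := (~~ v.1, if v.1 then v.2 else (v.2 + k) %% 5).

Definition good (m : nat) (lR lS lT : seq bool) : bool :=
  let ec := adjc m (nth false lR) (nth false lS) (nth false lT) in
  if disconn m ec then true else
  if (1 < m) && hdfs (verts m) ec (false, 0) (size (verts m)) [:: (false, 0)] (false, 0) then true else
  if (m == 1) && iso_c m ec k2c id id then true else
  (m == 5) && has (fun k => iso_c m ec petc (gA k) (gAi k) || iso_c m ec petc (gB k) (gBi k)) (iota 0 5).

Definition symm_c (m : nat) (l : seq bool) :=
  all (fun j => nth false l ((m - j) %% m) == nth false l j) (iota 0 m).

Definition cond (m : nat) (lR lS lT : seq bool) : bool :=
  [&& symm_c m lR, symm_c m lT, ~~ nth false lR 0, ~~ nth false lT 0, nth false lS 0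
    & count id lR == count id lT].

Fixpoint allbl (n : nat) : seq (seq bool) :=
  if n is n'.+1 then map (cons true) (allbl n') ++ map (cons false) (allbl n') else [:: [::]].

Definition checkm (m : nat) : bool :=
  uniq (verts m) &&
  all (fun lR => all (fun lS => all (fun lT =>
     if cond m lR lS lT then good m lR lS lT else true) (allbl m)) (allbl m)) (allbl m).



Lemma lhasE (T : Type) (a : T -> bool) s : lhas a s = has a s.
Proof. by elim: s => //= x s ->; case: (a x). Qed.

Lemma mem_allbl (l : seq bool) : l \in allbl (size l).
Proof.
elim: l => [|b l IH] //=; rewrite mem_cat.
by case: b; rewrite ?(map_f (cons true) IH) ?(map_f (cons false) IH) ?orbT.
Qed.

Lemma mem_verts m (v : V) : (v \in verts m) = (v.2 < m).
Proof.
case: v => b i /=; rewrite /verts mem_cat.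
have H c : ((b, i) \in map (pair c) (iota 0 m)) = (b == c) && (i < m).
  apply/mapP/andP => [[k] | [/eqP -> h]].
    by rewrite mem_iota add0n => /andP[_ hk] [-> ->]; rewrite eqxx.
  by exists i; rewrite ?mem_iota ?add0n.
by rewrite !H {H}; case: b => /=; rewrite ?orbF.
Qed.

Definition fromv m (x : bvert m) : V := (x.1, val x.2).
Definition tov m (x0 : 'I_m) (v : V) : bvert m := (v.1, insubd x0 v.2).

Lemma fromv_verts m (x : bvert m) : fromv x \in verts m.
Proof. by rewrite mem_verts /= ltn_ord. Qed.

Lemma tovK m (x0 : 'I_m) x : tov x0 (fromv x) = x.
Proof. by case: x => b i; rewrite /tov /fromv /= valKd. Qed.

Lemma fromvK m (x0 : 'I_m) v : v \in verts m -> fromv (tov x0 v) = v.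
Proof. by case: v => b i; rewrite mem_verts /= => h; rewrite /fromv /tov /= val_insubd h. Qed.

Lemma fromv_inj m : injective (@fromv m).
Proof. by case=> [b i] [c j]; rewrite /fromv /= => [[-> /val_inj ->]]. Qed.

Definition rep m (e : rel (bvert m)) (ec : rel V) := forall x y, e x y = ec (fromv x) (fromv y).

Lemma exists_hasr m (X : {set 'I_m}) (r : nat -> bool) (i j : 'I_m) :
  (forall k : 'I_m, r (val k) = (k \in X)) ->
  [exists k in X, j == zadd i k] = hasr r m i j.
Proof.
move=> rX; apply/existsP/hasP => [[k /andP[kX /eqP ->]] | [k]].
  exists (val k); first by rewrite mem_iota /= ltn_ord.
  by rewrite rX kX /=.
rewrite mem_iota add0n => /andP[_ hk] /andP[rk /eqP hj].
exists (Ordinal hk); rewrite -rX /= rk /=.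
by apply/eqP/val_inj; rewrite /= hj.
Qed.

Lemma rep_bicirc m (R S T : {set 'I_m}) (r s t : nat -> bool) :
  (forall i : 'I_m, r (val i) = (i \in R)) ->
  (forall i : 'I_m, s (val i) = (i \in S)) ->
  (forall i : 'I_m, t (val i) = (i \in T)) ->
  rep (bicirc_adj R S T) (adjc m r s t).
Proof.
by move=> hr hs ht [[] i] [[] j]; rewrite /bicirc_adj /adjc /fromv /=; apply: exists_hasr.
Qed.

Lemma path_from m (e : rel (bvert m)) ec (H : rep e ec) x p :
  path e x p -> path ec (fromv x) (map (@fromv m) p).
Proof. by elim: p x => //= y p IH x /andP[h1 h2]; rewrite -H h1 IH. Qed.

Lemma path_to m (x0 : 'I_m) (e : rel (bvert m)) ec (H : rep e ec) x p :
  x \in verts m -> all (fun v => v \in verts m) p -> path ec x p ->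
  path e (tov x0 x) (map (tov x0) p).
Proof.
elim: p x => //= y p IH x hx /andP[hy hp] /andP[h1 h2].
by rewrite H !fromvK // h1 IH.
Qed.

Lemma hdfs_sound vs ec st n vis cur : hdfs vs ec st n vis cur ->
  exists p, [/\ path ec cur p, ec (last cur p) st, all (fun v => v \notin vis) p, uniq p &
     all (fun v => v \in vs) p && all (fun v => v \in vis ++ p) vs].
Proof.
elim: n vis cur => [|n IH] vis cur /=.
  case: ifP => // /andP[h1 h2] _; exists [::]; by rewrite /= h1 cats0 h2.
case: ifP => [/andP[h1 h2] _ | _]; first by exists [::]; rewrite /= h1 cats0 h2.
rewrite lhasE => /hasP[v vin]; case: ifP => // vvis; case: ifP => // hcv.
move/IH => [p [hp hl hn hu /andP[hs1 hs2]]].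
exists (v :: p); split => //=.
- by rewrite hcv hp.
- rewrite vvis /=; apply/allP => w wp; move/allP: hn => /(_ w wp).
  by rewrite in_cons negb_or => /andP[].
- rewrite hu andbT; apply/negP => vp; move/allP: hn => /(_ v vp).
  by rewrite in_cons eqxx.
- rewrite vin hs1 /=; apply/allP => w wv; move/allP: hs2 => /(_ w wv).
  by rewrite !mem_cat !in_cons; case: (w == v); case: (w \in vis); case: (w \in p).
Qed.

Lemma hdfs_complete vs ec st p : forall n vis cur, size p <= n -> path ec cur p ->
  ec (last cur p) st -> all (fun v => v \notin vis) p -> uniq p ->
  all (fun v => v \in vs) p -> all (fun v => v \in vis ++ p) vs -> hdfs vs ec st n vis cur.
Proof.
elim: p => [|v p IH] n vis cur /=.
  move=> _ _ hl _ _ _; rewrite cats0 => hall.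
  by case: n => [|n] /=; rewrite hl hall.
case: n => // n hs /andP[hcv hp] hl /andP[hvn hn] /andP[hvp hu] /andP[hvs hps] hall /=.
case: ifP => // _; rewrite lhasE; apply/hasP; exists v => //.
rewrite (negbTE hvn) hcv; apply: IH => //.
- apply/allP => w wp; rewrite in_cons negb_or (allP hn w wp) andbT.
  by apply/eqP => ewv; rewrite -ewv wp in hvp.
- apply/allP => w wv; move/allP: hall => /(_ w wv).
  by rewrite !mem_cat !in_cons; case: (w == v); case: (w \in vis); case: (w \in p).
Qed.

Lemma ham_of m (x0 : 'I_m) (e : rel (bvert m)) ec n : rep e ec -> 1 < m -> uniq (verts m) ->
  hdfs (verts m) ec (false, 0) n [:: (false, 0)] (false, 0) -> hamiltonian e.
Proof.
move=> H hm1 hu /hdfs_sound [p [hp hl hn hup /andP[hs1 hs2]]].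
have h0 : (false, 0) \in verts m by rewrite mem_verts /=; lia.
have hq : all (fun v => v \in verts m) ((false, 0) :: p) by rewrite /= h0 hs1.
have h0p : (false, 0) \notin p.
  by apply/negP => h; move/allP: hn => /(_ _ h); rewrite in_cons eqxx.
have hcov : {subset verts m <= (false, 0) :: p}.
  by move=> v hv; move/allP: hs2 => /(_ v hv).
exists (map (tov x0) ((false, 0) :: p)); split.
- rewrite map_inj_in_uniq /= ?h0p ?hup //.
  move=> a b ha hb eab.
  by rewrite -(fromvK x0 (allP hq a ha)) eab fromvK // (allP hq b hb).
- move=> x; rewrite -(tovK x0 x); apply: map_f; exact: hcov (fromv_verts x).
- rewrite size_map; apply: leq_trans (uniq_leq_size hu hcov).
  by rewrite size_cat !size_map size_iota; lia.
- rewrite /= -map_rcons; apply: path_to => //.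
    by rewrite all_rcons h0 hs1.
  by rewrite rcons_path hp hl.
Qed.

Lemma nonham m (x0 : 'I_m) (e : rel (bvert m)) ec : val x0 = 0 -> rep e ec ->
  hdfs (verts m) ec (false, 0) (size (verts m)) [:: (false, 0)] (false, 0) = false ->
  ~ hamiltonian e.
Proof.
move=> h0 H hf [s [hu hall hsz hc]].
pose y0 : bvert m := (false, x0).
have hi : index y0 s < size s by rewrite index_mem.
have hrot : rot (index y0 s) s = y0 :: (drop (index y0 s).+1 s ++ take (index y0 s) s).
  by rewrite /rot (drop_nth y0 hi) nth_index.
move: hrot; set p := (drop _ s ++ _) => hrot.
have hc' : cycle e (y0 :: p) by rewrite -hrot rot_cycle.
have hu' : uniq (y0 :: p) by rewrite -hrot rot_uniq.
have hall' : forall x, x \in y0 :: p by move=> x; rewrite -hrot mem_rot.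
have fy0 : fromv y0 = (false, 0) by rewrite /fromv /= h0.
move: hc' => /=; rewrite rcons_path => /andP[hp hl].
move: hu' => /= /andP[hy0p hup].
have hpv : all (fun v => v \in verts m) (map (@fromv m) p).
  by apply/allP => w /mapP[x _ ->]; exact: fromv_verts.
have hum : uniq (map (@fromv m) p) by rewrite map_inj_uniq //; exact: fromv_inj.
move/negP: hf; apply; apply: (hdfs_complete (p := map (@fromv m) p)) => //.
- by apply: uniq_leq_size => // w hw; exact: (allP hpv).
- by rewrite -fy0; exact: path_from.
- by rewrite -fy0 last_map -H.
- apply/allP => w /mapP[x xp ->]; rewrite in_cons orbF -fy0 (inj_eq (@fromv_inj m)).
  by apply/eqP => ex; rewrite -ex xp in hy0p.
- apply/allP => v hv; rewrite -(fromvK x0 hv).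
  have := hall' (tov x0 v); rewrite in_cons => /orP[/eqP -> | h].
    by rewrite fy0 mem_head.
  by rewrite /= in_cons map_f ?orbT.
Qed.

Lemma iso_of m (x0 : 'I_m) (e f : rel (bvert m)) ec fc g gi :
  rep e ec -> rep f fc -> iso_c m ec fc g gi -> gisomorphic e f.
Proof.
move=> He Hf /andP[/allP h1 /allP h2].
exists (fun x => tov x0 (g (fromv x))); split.
  exists (fun x => tov x0 (gi (fromv x))) => x.
    have /and4P[g1 g2 /eqP g3 g4] := h1 _ (fromv_verts x).
    by rewrite fromvK // g3 tovK.
  have /and4P[g1 g2 g3 /eqP g4] := h1 _ (fromv_verts x).
  by rewrite fromvK // g4 tovK.
move=> x y.
have /and4P[gx _ _ _] := h1 _ (fromv_verts x).
have /and4P[gy _ _ _] := h1 _ (fromv_verts y).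
rewrite Hf !fromvK //.
have := h2 _ (fromv_verts x) => /allP /(_ _ (fromv_verts y)) /eqP ->.
by rewrite He.
Qed.

Lemma ham_iso (V1 W : finType) (e : rel V1) (f : rel W) :
  gisomorphic e f -> hamiltonian e -> hamiltonian f.
Proof.
move=> [g [[gi gK giK] hg]] [s [hu hall hsz hc]].
exists (map g s); split.
- by rewrite map_inj_uniq //; exact: can_inj gK.
- by move=> x; rewrite -(giK x) map_f.
- by rewrite size_map.
have E : relpre g f =2 e by move=> a b; rewrite /= hg.
by rewrite cycle_map (eq_cycle E).
Qed.

Lemma K2_nonham : ~ hamiltonian K2_adj.
Proof.
move=> [s [hu _ hsz _]].
move: (max_card (mem s)); rewrite (card_uniqP hu) card_prod card_bool card_ord.
by move=> h; have := leq_trans hsz h.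
Qed.

Lemma rep_K2 : rep K2_adj k2c.
Proof.
apply: rep_bicirc => i; rewrite ?in_set0 // in_set1 -val_eqE //.
Qed.

Lemma rep_pet : rep petersen_adj petc.
Proof.
by apply: rep_bicirc => i; rewrite ?in_set1 ?in_set2 -?val_eqE /= ?inordK.
Qed.

Lemma pet_nonham : ~ hamiltonian petersen_adj.
Proof.
apply: (nonham (x0 := ord0 : 'I_5)) => //; first exact: rep_pet.
by vm_compute.
Qed.

Lemma disconn_false m (x0 : 'I_m) (e : rel (bvert m)) ec : val x0 = 0 -> rep e ec ->
  gconnected e -> disconn m ec = false.
Proof.
move=> h0 H hc; apply/negP; rewrite /disconn; set C := clos m ec.
case/and3P => /allP hcl hC0 hn; apply: (negP hn); apply/allP => v hv.
have := hc (false, x0) (tov x0 v) => /connectP[p hp hl].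
suff: forall y q, fromv y \in C -> path e y q -> fromv (last y q) \in C.
  by move/(_ _ _ _ hp); rewrite -hl fromvK //; apply; rewrite /fromv /= h0.
move=> y q; elim: q y => //= z q IH y hy /andP[hyz hq]; apply: IH hq.
move/allP: (hcl _ (fromv_verts y)) => /(_ _ (fromv_verts z)).
by rewrite hy -H hyz.
Qed.

Lemma cnt m (R : {set 'I_m}) : count id (map (fun i => i \in R) (enum 'I_m)) = #|R|.
Proof. by rewrite count_map enumT cardE /enum_mem size_filter. Qed.

Lemma checkm_ok m : 0 < m <= 5 -> checkm m.
Proof. by case: m => [|[|[|[|[|[|m]]]]]] //= _; vm_compute. Qed.

Theorem lemma3p1 (m : nat) (hm : 0 < m) (R S T : {set 'I_m}) :
  m <= 5 ->
  symm_set R -> symm_set T ->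
  Ordinal hm \notin R -> Ordinal hm \notin T ->
  Ordinal hm \in S ->
  #|R| = #|T| ->
  gconnected (bicirc_adj R S T) ->
  (hamiltonian (bicirc_adj R S T) <->
     ~ gisomorphic (bicirc_adj R S T) K2_adj /\
     ~ gisomorphic (bicirc_adj R S T) petersen_adj).
Proof.
move=> m5 hR hT h0R h0T h0S hcard hconn.
have nthE (X : {set 'I_m}) (i : 'I_m) :
    nth false [seq j \in X | j <- enum 'I_m] i = (i \in X).
  by rewrite (nth_map i) ?size_enum_ord ?ltn_ord // nth_ord_enum.
set lR := [seq j \in R | j <- enum 'I_m].
set lS := [seq j \in S | j <- enum 'I_m].
set lT := [seq j \in T | j <- enum 'I_m].
have Hrep : rep (bicirc_adj R S T) (adjc m (nth false lR) (nth false lS) (nth false lT)).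
  by apply: rep_bicirc; apply: nthE.
pose x0 := Ordinal hm.
have symE (X : {set 'I_m}) : symm_set X -> symm_c m [seq j \in X | j <- enum 'I_m].
  move=> hX; apply/allP => j; rewrite mem_iota add0n => /andP[_ hj].
  have := hX (Ordinal hj).
  have := nthE X (zopp (Ordinal hj)); have := nthE X (Ordinal hj); rewrite /= => -> ->.
  by move=> ->.
have hcond : cond m lR lS lT.
  have e1 := nthE R x0; have e2 := nthE S x0; have e3 := nthE T x0; simpl in e1, e2, e3.
  by rewrite /cond symE // symE // e1 e2 e3 h0R h0T h0S !cnt hcard eqxx.
have hmem (X : {set 'I_m}) : [seq j \in X | j <- enum 'I_m] \in allbl m.
  by have := mem_allbl [seq j \in X | j <- enum 'I_m]; rewrite size_map size_enum_ord.
have : 0 < m <= 5 by rewrite hm m5.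
move/checkm_ok => /andP[uniqV /allP hall].
have := hall _ (hmem R) => /allP /(_ _ (hmem S)) /allP /(_ _ (hmem T)).
rewrite -/lR -/lS -/lT hcond /good.
rewrite (disconn_false (x0 := x0) _ Hrep hconn) //.
move=> hgood; split.
  move=> hH; split => hiso.
    exact: K2_nonham (ham_iso hiso hH).
  exact: pet_nonham (ham_iso hiso hH).
case=> nK nP; move: hgood.
case: ifP => [/andP[hm1 hd] _ | _]; first exact: (ham_of x0 Hrep hm1 uniqV hd).
case: ifP => [/andP[/eqP hm1 hiso] _ | _].
  exfalso; apply: nK; subst m; exact: (iso_of x0 Hrep rep_K2 hiso).
case/andP => /eqP hm5 /hasP[k _ /orP[h|h]]; exfalso; apply: nP; subst m.
  exact: (iso_of x0 Hrep rep_pet h).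
exact: (iso_of x0 Hrep rep_pet h).
Qed.
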